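(* Let $\mathcal{N}=\{1,\dots,N\}$ be a set of clients, let $G$ be a positive integer, and for each $n\in\mathcal{N}$ let $\rho_n>0$, $E_n>0$, $D_n>0$, $C_n\in\mathbb{R}$ and $p\in\mathbb{R}$. Each client $n$ chooses $x_n\in[0,D_n]$ and has cost $$F_n(x_n,\boldsymbol{x}_{-n})=\rho_n\left(\frac{1}{\sqrt{\big(x_n+\sum_{n'\neq n}x_{n'}\big)G}}+\frac{1}{G}\right)+E_nx_n+C_n+p .$$ Then for every $n\in\mathcal{N}$ and every $\boldsymbol{x}_{-n}\in\prod_{n'\neq n}[0,D_{n'}]$, the best response of client $n$ (the minimizer of $F_n(\cdot,\boldsymbol{x}_{-n})$ over $[0,D_n]$) is $$x_n^{\rm BR}(\boldsymbol{x}_{-n})=\min\left\{D_n,\ \max\left\{\sqrt[3]{\frac{\rho_n^2}{4GE_n^2}}-\sum_{n'\in\mathcal{N},n'\neq n}x_{n'},\ 0\right\}\right\}.$$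
   Context: Here $\boldsymbol{x}_{-n}$ denotes the vector of choices of all clients other than $n$. The cost is interpreted as $+\infty$ when $\sum_{n'\in\mathcal{N}}x_{n'}=0$. *)

(* Defs.v *)
From HB Require Import structures.
From mathcomp Require Import all_boot all_order all_algebra.
From mathcomp Require Import all_classical all_reals all_analysis.
Set Implicit Arguments. Unset Strict Implicit. Unset Printing Implicit Defensive.
Import Order.TTheory GRing.Theory Num.Theory.
Local Open Scope ring_scope.

Definition upd (R : realType) (N : nat) (x : 'I_N -> R) (n : 'I_N) (y : R)
  : 'I_N -> R := fun i => if i == n then y else x i.

Definition cost (R : realType) (N : nat) (G : nat) (rho E C : 'I_N -> R) (p : R)
  (x : 'I_N -> R) (n : 'I_N) : \bar R :=
  let s := \sum_(i < N) x i in
  if s == 0 then +oo%E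
  else ((rho n * ((Num.sqrt (s * G%:R))^-1 + (G%:R)^-1) + E n * x n + C n + p)%:E).

Definition best_response (R : realType) (N : nat) (G : nat)
  (rho E C D : 'I_N -> R) (p : R) (x : 'I_N -> R) (n : 'I_N) (y : R) : Prop :=
  0 <= y <= D n /\
  forall z, 0 <= z <= D n ->
    (cost G rho E C p (upd x n y) n <= cost G rho E C p (upd x n z) n)%E.

Definition cbrt (R : realType) (a : R) : R := a `^ (3%:R^-1).

(* Main.v *)
Require Import Defs.
From mathcomp Require Import all_boot all_order all_algebra.
From mathcomp Require Import all_classical all_reals all_analysis.
From mathcomp Require Import ring lra.
Import Order.TTheory GRing.Theory Num.Theory.
Local Open Scope ring_scope.

Lemma keys (R : realType) (K E s s' s0 : R) : 0 < K -> 0 < E -> 0 < s -> 0 < s' ->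
  0 < s0 -> 2 * E * s0 ^+ 3 = K -> (s0 <= s' < s) || (s < s' <= s0) ->
  K / s' + E * s' ^+ 2 < K / s + E * s ^+ 2.
Proof.
move=> K0 E0 s0p s'0 s00 hK h.
rewrite -subr_gt0.
have -> : K / s + E * s ^+ 2 - (K / s' + E * s' ^+ 2) =
   ((s - s') * (E * (s + s') * s * s' - K)) / (s * s').
  by field; apply/andP; split; rewrite gt_eqF.
apply: divr_gt0; last exact: mulr_gt0.
rewrite -hK.
case/orP: h => /andP[h1 h2].
- apply: mulr_gt0; first by rewrite subr_gt0.
  have h3 : s0 * s0 <= s' * s' by apply: ler_pM; rewrite ?mulr_ge0 //; lra.
  have h4 : s0 * s0 * s0 <= s' * s' * s by apply: ler_pM; rewrite ?mulr_ge0 //; lra.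
  have h5 : s' * s' * s < s * s * s'.
    have hp : 0 < s * s' by apply: mulr_gt0.
    nra.
  have h6 : 2 * s0 ^+ 3 < (s + s') * s * s'.
    have -> : (s + s') * s * s' = s * s * s' + s' * s' * s by ring.
    have -> : s0 ^+ 3 = s0 * s0 * s0 by ring.
    lra.
  have -> : E * (s + s') * s * s' - 2 * E * s0 ^+ 3 = E * ((s + s') * s * s' - 2 * s0 ^+ 3) by ring.
  by apply: mulr_gt0 => //; rewrite subr_gt0.
- rewrite -mulrNN; apply: mulr_gt0; first by rewrite oppr_gt0 subr_lt0.
  have h3 : s * s' <= s0 * s0 by apply: ler_pM; rewrite ?mulr_ge0 //; lra.
  have h4 : s * s' * s' <= s0 * s0 * s0 by apply: ler_pM; rewrite ?mulr_ge0 //; lra.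
  have h5 : s * s * s' < s' * s' * s.
    have hp : 0 < s * s' by apply: mulr_gt0.
    nra.
  have h6 : (s + s') * s * s' < 2 * s0 ^+ 3.
    have -> : (s + s') * s * s' = s * s * s' + s' * s' * s by ring.
    have -> : s0 ^+ 3 = s0 * s0 * s0 by ring.
    have -> : s' * s' * s = s * s' * s' by ring.
    lra.
  have -> : E * (s + s') * s * s' - 2 * E * s0 ^+ 3 = E * ((s + s') * s * s' - 2 * s0 ^+ 3) by ring.
  rewrite oppr_gt0 pmulr_rlt0 // subr_lt0.
by [].
Qed.

Lemma keyt (R : realType) (G : nat) (rho E c t t' : R) : (0 < G)%N -> 0 < rho -> 0 < E ->
  0 < c -> c ^+ 3 = rho ^+ 2 / (4 * G%:R * E ^+ 2) -> 0 < t -> 0 < t' ->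
  (c <= t' < t) || (t < t' <= c) ->
  rho * (Num.sqrt (t' * G%:R))^-1 + E * t' < rho * (Num.sqrt (t * G%:R))^-1 + E * t.
Proof.
move=> G0 r0 E0 c0 hc t0 t'0 h.
have G0' : 0 < (G%:R : R) by rewrite ltr0n.
set g := Num.sqrt (G%:R : R).
have g0 : 0 < g by rewrite sqrtr_gt0.
rewrite (sqrtrM _ (ltW t0)) (sqrtrM _ (ltW t'0)).
have that : forall u : R, 0 <= u -> rho * (Num.sqrt u * g)^-1 + E * u =
   (rho / g) / Num.sqrt u + E * (Num.sqrt u) ^+ 2.
  move=> u u0; rewrite sqr_sqrtr // invfM; ring.
rewrite !that ?ltW //.
apply: (@keys _ _ _ _ _ (Num.sqrt c)).
- by apply: divr_gt0.
- by [].
- by rewrite sqrtr_gt0.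
- by rewrite sqrtr_gt0.
- by rewrite sqrtr_gt0.
- have hp1 : 0 <= 2 * E * Num.sqrt c ^+ 3.
    by apply: mulr_ge0; [apply: mulr_ge0; lra | apply: exprn_ge0; apply: sqrtr_ge0].
  have hp2 : 0 <= rho / g by apply: ltW; apply: divr_gt0.
  apply/eqP; rewrite -(@eqrXn2 _ 2) //.
  apply/eqP.
  have -> : (2 * E * Num.sqrt c ^+ 3) ^+ 2 = 4 * E ^+ 2 * (Num.sqrt c ^+ 2) ^+ 3 by ring.
  rewrite sqr_sqrtr ?ltW // hc expr_div_n sqr_sqrtr ?ltW //.
  field; rewrite ?gt_eqF //.
- case/orP: h => /andP[h1 h2]; apply/orP; [left|right]; rewrite ler_sqrt ?ltr_sqrt ?h1 ?h2 //; by apply: ltW.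
Qed.

Theorem lemma1 (R : realType) (N G : nat) (rho E D C : 'I_N -> R) (p : R)
  (hG : (0 < G)%N)
  (hrho : forall n, 0 < rho n) (hE : forall n, 0 < E n) (hD : forall n, 0 < D n)
  (n : 'I_N) (x : 'I_N -> R)
  (hx : forall m, m != n -> 0 <= x m <= D m) :
  let xBR := Num.min (D n)
      (Num.max (cbrt (rho n ^+ 2 / (4 * G%:R * E n ^+ 2))
                - \sum_(m < N | m != n) x m) 0) in
  best_response G rho E C D p x n xBR /\
  (forall y, best_response G rho E C D p x n y -> y = xBR).
Proof.
move=> xBR.
set S := \sum_(m < N | m != n) x m.
have S0 : 0 <= S by apply: sumr_ge0 => i /hx /andP[].
have hsum : forall y, \sum_i upd x n y i = y + S.
  move=> y; rewrite (bigD1 n) //= /upd eqxx; congr (_ + _).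
  by apply: eq_bigr => i /negbTE ->.
have hupd : forall y, upd x n y n = y by move=> y; rewrite /upd eqxx.
set A := rho n ^+ 2 / (4 * G%:R * E n ^+ 2).
have A0 : 0 < A.
  apply: divr_gt0; first by apply: exprn_gt0.
  by apply: mulr_gt0; [apply: mulr_gt0; rewrite ?ltr0n | apply: exprn_gt0].
set c := cbrt A.
have c0 : 0 < c by apply: powR_gt0.
have c3 : c ^+ 3 = A.
  rewrite /c /cbrt -powR_mulrn ?ltW // -powRrM mulVf ?powRr1 ?ltW //.
have D0 := hD n.
have F : [/\ 0 <= xBR, xBR <= D n, (xBR < D n -> c <= xBR + S),
             (0 < xBR -> xBR + S <= c) & 0 < xBR + S].
  rewrite /xBR -/S -/A -/c.
  have [h1|h1] := leP (c - S) 0.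
    rewrite min_r; last exact: ltW. split => //; lra.
  have [h2|h2] := leP (c - S) (D n).
     split => //; lra.
   split => //; lra.
case: F => F1 F2 F3 F4 F5.
have strict : forall z, 0 <= z <= D n -> z != xBR ->
    (cost G rho E C p (upd x n xBR) n < cost G rho E C p (upd x n z) n)%E.
  move=> z /andP[z0 zD] zne.
  rewrite /cost !hsum !hupd (gt_eqF F5).
  have [hz|hz] := eqVneq (z + S) 0; first by rewrite ltry.
  rewrite lte_fin.
  have zS : 0 < z + S by rewrite lt_neqAle eq_sym hz /=; lra.
  have := @keyt R G (rho n) (E n) c (z + S) (xBR + S) hG (hrho n) (hE n) c0 c3 zS F5.
  have hor : (c <= xBR + S < z + S) || (z + S < xBR + S <= c).
    have [h|h] := ltP xBR z.
      apply/orP; left; apply/andP; split; last lra.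
      by apply: F3; lra.
    have h' : z < xBR by rewrite lt_neqAle zne h.
    apply/orP; right; apply/andP; split; first lra.
    by apply: F4; lra.
  move=> /(_ hor).
  rewrite !mulrDr.
  lra.
split.
  split; first by apply/andP.
  move=> z hz; have [->|ne] := eqVneq z xBR; first by [].
  exact: ltW (strict z hz ne).
move=> y [hy hbr].
apply/eqP; apply/negPn/negP => ne.
have := strict y hy ne.
by rewrite ltNge hbr // F1 F2.
Qed.
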